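(* Let $H^2\times H^2$ carry the product metric $\rho(\mathsf z,\mathsf w)=\sqrt{d_H(z_1,w_1)^2+d_H(z_2,w_2)^2}$, and for $\mathsf z,\mathsf w\in H^2\times H^2$ let $E(\mathsf z,\mathsf w)=\{\mathsf x: \rho(\mathsf x,\mathsf z)=\rho(\mathsf x,\mathsf w)\}$. For distinct $z,w\in H^2$ and $k\in\mathbb R$ let $S_k(z,w)=\{x\in H^2: d_H(x,z)^2-d_H(x,w)^2=k\}$, and for $\mathsf z=(z_1,z_2)$, $\mathsf w=(w_1,w_2)$ with $z_i\neq w_i$ let $E_k(\mathsf z,\mathsf w)=S_k(z_1,w_1)\times S_k(w_2,z_2)$; the spine of $E(\mathsf z,\mathsf w)$ is $E_0(\mathsf z,\mathsf w)$. For an isometry $\gamma$ of $H^2\times H^2$ and $\mathsf x\in H^2\times H^2$, a point $\mathsf y$ is called $\gamma$-visible to $\mathsf x$ if $\rho(\mathsf y,\mathsf x)\le\rho(\mathsf y,\gamma(\mathsf x))$ and $\rho(\mathsf y,\mathsf x)\le \rho(\mathsf y,\gamma^{-1}(\mathsf x))$, and $\gamma$-invisible otherwise; a set is $\gamma$-invisible to $\mathsf x$ if each of its points is. Let $\mathsf x,\mathsf y\in H^2\times H^2$ (with distinct coordinates, so that the spine is defined) and let $\gamma$ be an isometry of $H^2\times H^2$. Suppose $E(\mathsf x,\mathsf y)\cap E(\mathsf x,\gamma(\mathsf x))=\emptyset$ and $E(\mathsf x,\mathsf y)\cap E(\mathsf x,\gamma^{-1}(\mathsf x))=\emptyset$.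 Then $E(\mathsf x,\mathsf y)$ is $\gamma$-invisible to $\mathsf x$ if and only if the spine $E_0(\mathsf x,\mathsf y)$ is $\gamma$-invisible to $\mathsf x$.
   Context: $d_H$ is the hyperbolic distance on the hyperbolic plane $H^2$. *)

(* Defs.v *)
From Stdlib Require Import Reals.
Open Scope R_scope.

(* Upper half-plane model of the hyperbolic plane H^2. *)
Definition H2 : Type := { p : R * R | 0 < snd p }.

Definition hx (z : H2) : R := fst (proj1_sig z).
Definition hy (z : H2) : R := snd (proj1_sig z).

Definition arcosh (t : R) : R := ln (t + sqrt (t ^ 2 - 1)).

(* Hyperbolic distance d_H on the upper half-plane (curvature -1). *)
Definition dH (z w : H2) : R :=
  arcosh (1 + ((hx z - hx w) ^ 2 + (hy z - hy w) ^ 2) / (2 * hy z * hy w)).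

Definition H2xH2 : Type := (H2 * H2)%type.

Definition rho (z w : H2xH2) : R :=
  sqrt (dH (fst z) (fst w) ^ 2 + dH (snd z) (snd w) ^ 2).

Definition Eset (z w : H2xH2) (p : H2xH2) : Prop := rho p z = rho p w.

Definition Sk (k : R) (z w : H2) (x : H2) : Prop := dH x z ^ 2 - dH x w ^ 2 = k.

Definition Ek (k : R) (z w : H2xH2) (p : H2xH2) : Prop :=
  Sk k (fst z) (fst w) (fst p) /\ Sk k (snd w) (snd z) (snd p).

Definition spine (z w : H2xH2) : H2xH2 -> Prop := Ek 0 z w.

Definition isometry (g : H2xH2 -> H2xH2) : Prop :=
  (forall p q, rho (g p) (g q) = rho p q) /\
  (forall q, exists p, g p = q) /\ (forall p q, g p = g q -> p = q).

Definition inverse_of (g ginv : H2xH2 -> H2xH2) : Prop :=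
  (forall p, g (ginv p) = p) /\ (forall p, ginv (g p) = p).

(* y is gamma-visible to x (gamma given with its inverse ginv) *)
Definition visible (g ginv : H2xH2 -> H2xH2) (x y : H2xH2) : Prop :=
  rho y x <= rho y (g x) /\ rho y x <= rho y (ginv x).

Definition invisible_set (g ginv : H2xH2 -> H2xH2) (x : H2xH2)
  (A : H2xH2 -> Prop) : Prop :=
  forall y, A y -> ~ visible g ginv x y.

(* Main.v *)
Require Import Defs.
From Stdlib Require Import Reals.
From Stdlib Require Import Lra Psatz ProofIrrelevance.
Open Scope R_scope.


Lemma exp_pos' x : 0 < exp x. Proof. apply exp_pos. Qed.

Lemma cosh_sq_sinh t : (cosh t)^2 - 1 = (sinh t)^2.
Proof. unfold cosh, sinh.
 assert (exp t * exp (-t) = 1) by (rewrite <- exp_plus; replace (t + - t) with 0 by ring; apply exp_0).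
 field_simplify. nra. Qed.

Lemma sinh_ge0 t : 0 <= t -> 0 <= sinh t.
Proof. intros. unfold sinh. assert (exp (-t) <= exp t).
 { destruct (Req_dec t 0). subst. rewrite Ropp_0. lra. left. apply exp_increasing. lra. } lra. Qed.

Lemma arcosh_cosh t : 0 <= t -> arcosh (cosh t) = t.
Proof. intros H. unfold arcosh. rewrite cosh_sq_sinh.
 rewrite <- Rsqr_pow2, sqrt_Rsqr by (apply sinh_ge0; auto).
 replace (cosh t + sinh t) with (exp t) by (unfold cosh, sinh; field). apply ln_exp. Qed.

Lemma sqrt_ge0_pos s : 1 <= s -> 0 < s + sqrt (s^2 - 1).
Proof. intros. pose proof (sqrt_pos (s^2-1)). lra. Qed.

Lemma cosh_arcosh s : 1 <= s -> cosh (arcosh s) = s.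
Proof. intros H. unfold cosh, arcosh. pose proof (sqrt_ge0_pos s H).
 rewrite exp_Ropp, exp_ln by auto.
 assert (E: (sqrt (s^2-1))^2 = s^2 - 1) by (rewrite <- Rsqr_pow2; apply Rsqr_sqrt; nra).
 field_simplify; try lra. rewrite E. field. lra. Qed.

Lemma arcosh_ge0 s : 1 <= s -> 0 <= arcosh s.
Proof. intros H. unfold arcosh. rewrite <- ln_1. pose proof (sqrt_pos (s^2-1)).
 destruct (Req_dec (s + sqrt (s^2-1)) 1) as [E|E]. rewrite E; lra.
 left. apply ln_increasing; lra. Qed.

Lemma cosh_mono a b : 0 <= a -> a <= b -> cosh a <= cosh b.
Proof. intros Ha Hab. unfold cosh.
 destruct (Req_dec a b). subst; lra.
 assert (exp a < exp b) by (apply exp_increasing; lra).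
 assert (1 <= exp a) by (rewrite <- exp_0; destruct (Req_dec a 0); [subst; lra| left; apply exp_increasing; lra]).
 assert (exp (-b) <= 1) by (rewrite <- exp_0; destruct (Req_dec b 0); [subst; rewrite Ropp_0; lra| left; apply exp_increasing; lra]).
 assert (exp (-a) = exp (b - a) * exp (-b)) by (rewrite <- exp_plus; replace (b - a + - b) with (-a) by ring; auto).
 assert (exp b = exp (b - a) * exp a) by (rewrite <- exp_plus; replace (b - a + a) with b by ring; auto).
 assert (1 < exp (b-a)) by (rewrite <- exp_0; apply exp_increasing; lra).
 assert (0 < exp (-b)) by apply exp_pos.
 nra. Qed.

Lemma cosh_ge1 t : 1 <= cosh t.
Proof. destruct (Rle_dec 0 t). rewrite <- cosh_0. apply cosh_mono; lra.
 assert (E: cosh t = cosh (-t)) by (unfold cosh; rewrite Ropp_involutive; field). rewrite E.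
 rewrite <- cosh_0. apply cosh_mono; lra. Qed.

Lemma cp_const c x : continuity_pt (fun _ => c) x.
Proof. apply continuity_pt_const. intros a b; auto. Qed.
Lemma cp_id x : continuity_pt (fun t => t) x.
Proof. apply derivable_continuous_pt. apply derivable_pt_id. Qed.
Lemma cp_plus f g x : continuity_pt f x -> continuity_pt g x -> continuity_pt (fun t => f t + g t) x.
Proof. intros; apply (continuity_pt_plus f g x); auto. Qed.
Lemma cp_minus f g x : continuity_pt f x -> continuity_pt g x -> continuity_pt (fun t => f t - g t) x.
Proof. intros; apply (continuity_pt_minus f g x); auto. Qed.
Lemma cp_mult f g x : continuity_pt f x -> continuity_pt g x -> continuity_pt (fun t => f t * g t) x.
Proof. intros; apply (continuity_pt_mult f g x); auto. Qed.
Lemma cp_div f g x : continuity_pt f x -> continuity_pt g x -> g x <> 0 -> continuity_pt (fun t => f t / g t) x.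
Proof. intros; apply (continuity_pt_div f g x); auto. Qed.
Lemma cp_comp f g x : continuity_pt f x -> continuity_pt g (f x) -> continuity_pt (fun t => g (f t)) x.
Proof. intros; apply (continuity_pt_comp f g x); auto. Qed.
Lemma cp_pow f n x : continuity_pt f x -> continuity_pt (fun t => f t ^ n) x.
Proof. intros. induction n. simpl. apply cp_const. simpl. apply cp_mult; auto. Qed.
Lemma cp_sqrt f x : continuity_pt f x -> 0 <= f x -> continuity_pt (fun t => sqrt (f t)) x.
Proof. intros. apply cp_comp; auto. apply continuity_pt_sqrt; auto. Qed.
Lemma cp_ln f x : continuity_pt f x -> 0 < f x -> continuity_pt (fun t => ln (f t)) x.
Proof. intros. apply cp_comp; auto. apply derivable_continuous_pt.
 exists (/ f x). apply derivable_pt_lim_ln; auto. Qed.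
Lemma cp_cosh f x : continuity_pt f x -> continuity_pt (fun t => cosh (f t)) x.
Proof. intros. apply cp_comp; auto. apply derivable_continuous_pt. apply derivable_pt_cosh. Qed.
Lemma cp_arcosh f x : continuity_pt f x -> 1 <= f x -> continuity_pt (fun t => arcosh (f t)) x.
Proof. intros. unfold arcosh. apply cp_ln. apply cp_plus; auto. apply cp_sqrt.
 apply cp_minus. apply cp_pow; auto. apply cp_const. nra. apply sqrt_ge0_pos; auto. Qed.

Ltac cpt := repeat (first
 [ apply cp_const
 | apply cp_id
 | assumption
 | match goal with
   | |- continuity_pt (fun t => @?f t + @?g t) _ => apply (cp_plus f g)
   | |- continuity_pt (fun t => @?f t - @?g t) _ => apply (cp_minus f g)
   | |- continuity_pt (fun t => @?f t * @?g t) _ => apply (cp_mult f g)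
   | |- continuity_pt (fun t => @?f t ^ ?n) _ => apply (cp_pow f n)
   | |- continuity_pt (Rminus ?a) _ => apply (cp_minus (fun _ => a) (fun t => t))
   | |- continuity_pt (Rplus ?a) _ => apply (cp_plus (fun _ => a) (fun t => t))
   | |- continuity_pt (Rmult ?a) _ => apply (cp_mult (fun _ => a) (fun t => t))
   end ]).

Definition Qc X1 Y1 X2 Y2 := ((X1-X2)^2 + (Y1-Y2)^2)/(2*Y1*Y2).
Lemma dH_Qc z w : dH z w = arcosh (1 + Qc (hx z) (hy z) (hx w) (hy w)).
Proof. reflexivity. Qed.
Lemma Qc_ge0 X1 Y1 X2 Y2 : 0 < Y1 -> 0 < Y2 -> 0 <= Qc X1 Y1 X2 Y2.
Proof. intros. unfold Qc. unfold Rdiv. apply Rmult_le_pos. pose proof (pow2_ge_0 (X1-X2)); pose proof (pow2_ge_0 (Y1-Y2)); lra. left; apply Rinv_0_lt_compat; nra. Qed.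

Definition mden c d X Y := (c*X+d)^2 + (c*Y)^2.
Definition mX a b c d X Y := (a*c*(X^2+Y^2) + (a*d+b*c)*X + b*d)/mden c d X Y.
Definition mY a b c d X Y := (a*d-b*c)*Y/mden c d X Y.
Lemma mden_pos a b c d X Y : 0 < a*d-b*c -> 0 < Y -> 0 < mden c d X Y.
Proof. intros H HY. unfold mden.
 destruct (Req_dec c 0) as [->|Hc].
 - assert (d <> 0) by (intro; subst; nra). assert (0 < d*d) by (apply Rsqr_pos_lt; auto).
   replace ((0*X+d)^2 + (0*Y)^2) with (d*d) by ring. lra.
 - assert (0 < c*c) by (apply Rsqr_pos_lt; auto). assert (0 < (c*c)*(Y*Y)) by (apply Rmult_lt_0_compat; nra).
   assert (0 <= (c*X+d)^2) by (apply pow2_ge_0). replace ((c*Y)^2) with ((c*c)*(Y*Y)) by ring. lra.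
Qed.
Lemma mY_pos a b c d X Y : 0 < a*d-b*c -> 0 < Y -> 0 < mY a b c d X Y.
Proof. intros. unfold mY. pose proof (mden_pos a b c d X Y H H0). apply Rdiv_lt_0_compat; nra. Qed.
Lemma mQ a b c d X1 Y1 X2 Y2 : 0 < a*d-b*c -> 0 < Y1 -> 0 < Y2 ->
  Qc (mX a b c d X1 Y1) (mY a b c d X1 Y1) (mX a b c d X2 Y2) (mY a b c d X2 Y2) = Qc X1 Y1 X2 Y2.
Proof. intros H H1 H2. pose proof (mden_pos a b c d X1 Y1 H H1). pose proof (mden_pos a b c d X2 Y2 H H2).
 unfold Qc, mX, mY. unfold mden in *. field. repeat split; lra.
Qed.
Lemma minv a b c d X Y : 0 < a*d-b*c -> 0 < Y ->
  mX d (-b) (-c) a (mX a b c d X Y) (mY a b c d X Y) = X /\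
  mY d (-b) (-c) a (mX a b c d X Y) (mY a b c d X Y) = Y.
Proof. intros H H1. pose proof (mden_pos a b c d X Y H H1).
 assert (E: mden (-c) a (mX a b c d X Y) (mY a b c d X Y) = (a*d-b*c)^2 / mden c d X Y).
 { unfold mX, mY. unfold mden in *. field. lra. }
 assert (0 < mden (-c) a (mX a b c d X Y) (mY a b c d X Y)).
 { rewrite E. apply Rdiv_lt_0_compat; auto. apply pow_lt; auto. }
 split.
 - unfold mX at 1. rewrite E. unfold mX, mY. unfold mden in *. field. split; lra.
 - unfold mY at 1. rewrite E. unfold mX, mY. unfold mden in *. field. split; lra.
Qed.
Lemma mcont a b c d fx fy v : 0 < a*d-b*c -> continuity_pt fx v -> continuity_pt fy v -> 0 < fy v ->
  continuity_pt (fun t => mX a b c d (fx t) (fy t)) v /\ continuity_pt (fun t => mY a b c d (fx t) (fy t)) v.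
Proof. intros H Hx Hy Hp. pose proof (mden_pos a b c d (fx v) (fy v) H Hp).
 unfold mX, mY. split; apply (cp_div (fun t => _) (fun t => mden c d (fx t) (fy t))); try lra;
 unfold mden; cpt. Qed.

Definition mXi a b c d := mX d (-b) (-c) a.
Definition mYi a b c d := mY d (-b) (-c) a.
Lemma deti a b c d : 0 < a*d-b*c -> 0 < d*a - (-b)*(-c).
Proof. intros; nra. Qed.

Lemma H2_eq (z w : H2) : hx z = hx w -> hy z = hy w -> z = w.
Proof. destruct z as [[a b] p], w as [[a' b'] p']. unfold hx, hy; simpl. intros -> ->.
 f_equal. apply proof_irrelevance. Qed.

Lemma normalize (c o : H2) : c <> o ->
 exists (Gx Gy : R -> R -> R) (mu : R), 0 < mu /\ mu <> 1 /\
  (forall X Y, 0 < Y -> 0 < Gy X Y) /\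
  (forall X1 Y1 X2 Y2, 0 < Y1 -> 0 < Y2 ->
     Qc (Gx X1 Y1) (Gy X1 Y1) (Gx X2 Y2) (Gy X2 Y2) = Qc X1 Y1 X2 Y2) /\
  (forall fx fy v, continuity_pt fx v -> continuity_pt fy v -> 0 < fy v ->
     continuity_pt (fun t => Gx (fx t) (fy t)) v /\ continuity_pt (fun t => Gy (fx t) (fy t)) v) /\
  Gx 0 1 = hx c /\ Gy 0 1 = hy c /\ Gx 0 mu = hx o /\ Gy 0 mu = hy o /\
  (forall z : H2, exists X Y, 0 < Y /\ Gx X Y = hx z /\ Gy X Y = hy z).
Proof.
 intros Hco.
 assert (Hcy : 0 < hy c) by (destruct c as [[? ?] ?]; auto).
 assert (Hoy : 0 < hy o) by (destruct o as [[? ?] ?]; auto).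
 assert (Hzy : forall z : H2, 0 < hy z) by (intros [[? ?] ?]; auto).
 set (cx := hx c). set (cy := hy c).
 assert (dT : 0 < 1*cy - (-cx)*0) by (unfold cy; lra).
 set (px := mX 1 (-cx) 0 cy (hx o) (hy o)). set (py := mY 1 (-cx) 0 cy (hx o) (hy o)).
 assert (Hpy : 0 < py) by (apply mY_pos; auto).
 set (A := px). set (B := (1 - px^2 - py^2)/2). set (S := sqrt (A^2 + B^2)).
 assert (ES : S^2 = A^2 + B^2) by (unfold S; rewrite <- Rsqr_pow2; apply Rsqr_sqrt; nra).
 assert (HS : 0 <= S) by apply sqrt_pos.
 assert (Hab : exists al be, 0 < al*al - be*(-be) /\ mX al be (-be) al px py = 0).
 { destruct (Req_dec A 0) as [HA|HA].
   - exists 1, 0. split. lra. unfold mX, mden. fold A. rewrite HA. field.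
   - exists (S+B), (-A). split.
     + assert (0 < A*A) by (apply Rsqr_pos_lt; auto). nra.
     + unfold mX. unfold Rdiv. apply Rmult_eq_0_compat_r. fold A.
       transitivity (A*(S^2 - A^2 - B^2)). unfold B, A. field. rewrite ES; ring. }
 destruct Hab as [al [be [dR Hpx]]].
 pose (Fx := fun z : H2 => mX al be (-be) al (mX 1 (-cx) 0 cy (hx z) (hy z)) (mY 1 (-cx) 0 cy (hx z) (hy z))).
 pose (Fy := fun z : H2 => mY al be (-be) al (mX 1 (-cx) 0 cy (hx z) (hy z)) (mY 1 (-cx) 0 cy (hx z) (hy z))).
 pose (Gx := fun X Y => mXi 1 (-cx) 0 cy (mXi al be (-be) al X Y) (mYi al be (-be) al X Y)).
 pose (Gy := fun X Y => mYi 1 (-cx) 0 cy (mXi al be (-be) al X Y) (mYi al be (-be) al X Y)).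
 assert (HFy : forall z, 0 < Fy z) by (intros; unfold Fy; apply mY_pos; auto; apply mY_pos; auto).
 assert (GF : forall z, Gx (Fx z) (Fy z) = hx z /\ Gy (Fx z) (Fy z) = hy z).
 { intros z. unfold Gx, Gy, Fx, Fy, mXi, mYi.
   destruct (minv al be (-be) al (mX 1 (-cx) 0 cy (hx z) (hy z)) (mY 1 (-cx) 0 cy (hx z) (hy z)) dR) as [E1 E2].
   apply mY_pos; auto. rewrite E1, E2. apply minv; auto. }
 assert (Fc : Fx c = 0 /\ Fy c = 1).
 { assert (E1 : mX 1 (-cx) 0 cy (hx c) (hy c) = 0) by (unfold mX, mden; fold cx cy; field; lra).
   assert (E2 : mY 1 (-cx) 0 cy (hx c) (hy c) = 1) by (unfold mY, mden; fold cx cy; field; lra).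
   unfold Fx, Fy. rewrite E1, E2. unfold mX, mY, mden. split; field; nra. }
 assert (Fo : Fx o = 0) by exact Hpx.
 exists Gx, Gy, (Fy o). split; [|split; [|split; [|split; [|split]]]].
 - apply HFy.
 - intros Hm. apply Hco. destruct (GF c) as [A1 A2]. destruct (GF o) as [B1 B2].
   destruct Fc as [C1 C2]. apply H2_eq; congruence.
 - intros X Y HY. unfold Gy, mYi. apply mY_pos. apply deti; auto. apply mY_pos. apply deti; auto. auto.
 - intros X1 Y1 X2 Y2 H1 H2. unfold Gx, Gy, mXi, mYi. rewrite mQ. apply mQ; auto.
   apply deti; auto. apply deti; auto. apply mY_pos; auto. apply deti; auto. apply mY_pos; auto. apply deti; auto.
 - intros fx fy v Hx Hy Hp. unfold Gx, Gy, mXi, mYi.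
   destruct (mcont al (-be) (- -be) al fx fy v (deti _ _ _ _ dR) Hx Hy Hp) as [K1 K2].
   apply mcont; auto. apply deti; auto. apply mY_pos; auto. apply deti; auto.
 - destruct Fc as [C1 C2]. destruct (GF c) as [A1 A2]. destruct (GF o) as [B1 B2].
   rewrite C1, C2 in *. rewrite Fo in *. repeat split; auto.
   + intros z. exists (Fx z), (Fy z). destruct (GF z). auto.
Qed.

Definition PyT mu C T := (mu^2-1)/(2*(mu*T - C)).
Definition PxT sg C Py := sg * sqrt (2*C*Py - 1 - Py^2).
Definition between a b x := (a <= x <= b) \/ (b <= x <= a).
Definition sgn X := if Rle_dec 0 X then 1 else -1.

Lemma conc C P P1 P2 : (P - P1)*(P - P2) <= 0 -> 0 <= 2*C*P1 - 1 - P1^2 ->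
  0 <= 2*C*P2 - 1 - P2^2 -> 0 <= 2*C*P - 1 - P^2.
Proof. intros H1 H2 H3.
 assert (E1 : 2*C*P - 1 - P^2 = (2*C*P1 - 1 - P1^2) + (P - P1)*(2*C - P - P1)) by ring.
 assert (E2 : 2*C*P - 1 - P^2 = (2*C*P2 - 1 - P2^2) + (P - P2)*(2*C - P - P2)) by ring.
 destruct (Rle_dec 0 ((P - P1)*(2*C - P - P1))). lra.
 destruct (Rle_dec 0 ((P - P2)*(2*C - P - P2))). lra.
 exfalso.
 destruct (Rle_dec P1 P2).
 + assert (P1 <= P <= P2) by nra. 
   destruct (Req_dec P P1). subst. nra. destruct (Req_dec P P2). subst; nra.
   assert (2*C - P - P1 < 0) by nra. assert (0 < 2*C - P - P2) by nra. lra.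
 + assert (P2 <= P <= P1) by nra.
   destruct (Req_dec P P1). subst. nra. destruct (Req_dec P P2). subst; nra.
   assert (0 < 2*C - P - P1) by nra. assert (2*C - P - P2 < 0) by nra. lra.
Qed.

Lemma pathP mu X Y C T1 T : 0 < mu -> mu <> 1 -> 0 < Y ->
  C = (X^2+Y^2+1)/(2*Y) -> T1 = (X^2+Y^2+mu^2)/(2*mu*Y) ->
  (mu+1)^2 <= 4*mu*C^2 -> between T1 C T ->
  mu*T - C <> 0 /\ 0 < PyT mu C T /\ 0 <= 2*C*PyT mu C T - 1 - (PyT mu C T)^2 /\
  (forall sg, sg^2 = 1 -> Qc (PxT sg C (PyT mu C T)) (PyT mu C T) 0 1 = C - 1 /\
        1 + Qc (PxT sg C (PyT mu C T)) (PyT mu C T) 0 mu = T).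
Proof.
 intros Hmu Hmu1 HY HC HT1 Hcond Hb.
 assert (HCp : 0 < C) by (rewrite HC; apply Rdiv_lt_0_compat; nra).
 set (D := mu*T - C). set (D1 := mu*T1 - C). set (D2 := mu*C - C).
 assert (ED1 : D1 = (mu^2-1)/(2*Y)) by (unfold D1; rewrite HT1, HC; field; lra).
 assert (Hm2 : 0 < (mu-1)*(mu-1)) by (apply Rsqr_pos_lt; lra).
 assert (ED2 : D2 = (mu-1)*C) by (unfold D2; ring).
 assert (HD12 : 0 < D1*D2).
 { rewrite ED1, ED2. replace ((mu ^ 2 - 1) / (2 * Y) * ((mu - 1) * C)) with
     (((mu-1)*(mu-1)) * ((mu+1)*C/(2*Y))) by (field; lra).
   apply Rmult_lt_0_compat; auto. apply Rdiv_lt_0_compat; nra. }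
 assert (HbD : between D1 D2 D).
 { unfold D, D1, D2. destruct Hb as [[? ?]|[? ?]]; [left|right]; split; nra. }
 assert (sD : (0 < D1 /\ 0 < D2 /\ 0 < D) \/ (D1 < 0 /\ D2 < 0 /\ D < 0)).
 { destruct (Rlt_dec 0 D1).
   - assert (0 < D2) by nra. left. destruct HbD; lra.
   - assert (D1 <> 0) by (intro E; rewrite E in HD12; lra). assert (D2 < 0) by nra. right. destruct HbD; lra. }
 assert (HD0 : D <> 0) by (destruct sD; lra).
 assert (EPy : PyT mu C T = Y*D1/D) by (unfold PyT; fold D; rewrite ED1; field; lra).
 assert (HPy : 0 < PyT mu C T).
 { rewrite EPy. destruct sD as [[? [? ?]]|[? [? ?]]].
   apply Rdiv_lt_0_compat; nra.
   replace (Y*D1/D) with ((Y*(-D1))/(-D)) by (field; lra). apply Rdiv_lt_0_compat; nra. }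
 set (Py := PyT mu C T) in *.
 set (P2 := Y*D1/D2).
 assert (EP2 : P2 = (mu+1)/(2*C)) by (unfold P2; rewrite ED1, ED2; field; lra).
 assert (Hq2 : 0 <= 2*C*P2 - 1 - P2^2).
 { rewrite EP2. replace (2 * C * ((mu + 1) / (2 * C)) - 1 - ((mu + 1) / (2 * C)) ^ 2) with
     ((4*mu*C^2 - (mu+1)^2)/(4*C^2)) by (field; lra).
   apply Rmult_le_pos. lra. left. apply Rinv_0_lt_compat. nra. }
 assert (HqY : 0 <= 2*C*Y - 1 - Y^2).
 { replace (2*C*Y - 1 - Y^2) with (X^2) by (rewrite HC; field; lra). apply pow2_ge_0. }
 assert (Hbet : (Py - Y)*(Py - P2) <= 0).
 { rewrite EPy. unfold P2.
   replace ((Y * D1 / D - Y) * (Y * D1 / D - Y * D1 / D2)) with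
     ((Y*Y) * (D1*D2) * ((D1 - D)*(D2 - D)) / ((D*D)*(D2*D2))) by (field; split; lra).
   assert ((D1 - D)*(D2 - D) <= 0) by (destruct HbD; nra).
   assert (0 < (D*D)*(D2*D2)) by (apply Rmult_lt_0_compat; apply Rsqr_pos_lt; lra).
   assert (0 < Y*Y) by nra.
   assert ((Y*Y) * (D1*D2) * ((D1 - D)*(D2 - D)) <= 0).
   { assert (0 < (Y*Y)*(D1*D2)) by (apply Rmult_lt_0_compat; lra). nra. }
   assert (0 < / ((D*D)*(D2*D2))) by (apply Rinv_0_lt_compat; lra).
   unfold Rdiv. nra. }
 assert (Hq : 0 <= 2*C*Py - 1 - Py^2) by (apply (conc C Py Y P2); auto).
 split; auto. split; auto. split; auto.
 intros sg Hsg. unfold PxT.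
 assert (EPx : (sg * sqrt (2*C*Py - 1 - Py^2))^2 = 2*C*Py - 1 - Py^2).
 { rewrite Rpow_mult_distr, Hsg, <- Rsqr_pow2, Rsqr_sqrt; auto; ring. }
 assert (EPyD : Py * (2*D) = mu^2 - 1) by (rewrite EPy, ED1; field; split; lra).
 unfold Qc. split.
 - replace ((sg * sqrt (2 * C * Py - 1 - Py ^ 2) - 0) ^ 2 + (Py - 1) ^ 2) with
     ((sg * sqrt (2*C*Py - 1 - Py^2))^2 + (Py - 1) ^ 2) by ring. rewrite EPx. field. lra.
 - replace ((sg * sqrt (2 * C * Py - 1 - Py ^ 2) - 0) ^ 2 + (Py - mu) ^ 2) with
     ((sg * sqrt (2*C*Py - 1 - Py^2))^2 + (Py - mu) ^ 2) by ring. rewrite EPx.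
   unfold D in EPyD. apply (Rmult_eq_reg_r (2*Py*mu)). 2: nra.
   field_simplify; try lra.
Qed.

Lemma pathP1 mu X Y C T1 : 0 < mu -> mu <> 1 -> 0 < Y ->
  C = (X^2+Y^2+1)/(2*Y) -> T1 = (X^2+Y^2+mu^2)/(2*mu*Y) ->
  PyT mu C T1 = Y /\ PxT (sgn X) C Y = X.
Proof. intros Hmu Hmu1 HY HC HT1. split.
 - unfold PyT. rewrite HT1, HC. field. split. lra. split. lra.
   replace (X ^ 2 + Y ^ 2 + mu ^ 2 - (X ^ 2 + Y ^ 2 + 1)) with ((mu-1)*(mu+1)) by ring.
   apply Rmult_integral_contrapositive. split; lra.
 - unfold PxT. replace (2*C*Y - 1 - Y^2) with (X^2) by (rewrite HC; field; lra).
   rewrite <- Rsqr_pow2, sqrt_Rsqr_abs. unfold sgn. destruct (Rle_dec 0 X).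
   rewrite Rabs_right; lra. rewrite Rabs_left; lra.
Qed.

Definition dHc X1 Y1 X2 Y2 := arcosh (1 + Qc X1 Y1 X2 Y2).
Lemma dH_dHc z w : dH z w = dHc (hx z) (hy z) (hx w) (hy w).
Proof. reflexivity. Qed.

Lemma btw_sqrt a b x : between a b x -> between (sqrt a) (sqrt b) (sqrt x).
Proof. intros [[? ?]|[? ?]]; [left|right]; split; apply sqrt_le_1_alt; auto. Qed.
Lemma btw_cosh a b x : 0 <= a -> 0 <= b -> between a b x -> between (cosh a) (cosh b) (cosh x).
Proof. intros Ha Hb [[? ?]|[? ?]]; [left|right]; split; apply cosh_mono; lra. Qed.
Lemma btw_sym a b x : between a b x -> between b a x.
Proof. unfold between; tauto. Qed.
Lemma btw_ge a b x : between a b x -> Rmin a b <= x.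
Proof. intros [[? ?]|[? ?]]. apply Rle_trans with a; auto; apply Rmin_l. apply Rle_trans with b; auto; apply Rmin_r. Qed.

Lemma divlt a b c : 0 < b -> a/b < c -> a < c*b.
Proof. intros Hb H. assert (a = (a/b)*b) by (field; lra). rewrite H0. apply Rmult_lt_compat_r; auto. Qed.

Lemma caseB mu X Y : 0 < mu -> mu <> 1 -> 0 < Y ->
  ~ ((mu+1)^2 <= 4*mu*((X^2+Y^2+1)/(2*Y))^2) ->
  (mu+1)^2 <= 4*mu*((X^2+Y^2+mu^2)/(2*mu*Y))^2.
Proof. intros Hmu Hmu1 HY H1. apply Rnot_lt_le. intros H2. apply H1. clear H1.
 set (m := sqrt mu). assert (Hm : 0 < m) by (apply sqrt_lt_R0; auto).
 assert (Emu : mu = m*m) by (unfold m; rewrite sqrt_sqrt; lra). clearbody m.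
 set (W := X^2+Y^2) in *. assert (HW : Y*Y <= W) by (unfold W; pose proof (pow2_ge_0 X); replace (Y^2) with (Y*Y) by ring; lra).
 assert (E2 : 4*mu*((W+mu^2)/(2*mu*Y))^2 = (W+mu^2)^2/(mu*Y^2)) by (field; lra).
 rewrite E2 in H2.
 assert (H2' : (W+mu^2)^2 < (mu+1)^2 * (mu*Y^2)).
 { apply divlt; auto. apply Rmult_lt_0_compat; auto. apply pow_lt; auto. }
 assert (H3 : W + m^4 < m*(m*m+1)*Y).
 { subst mu. assert (0 < m*(m*m+1)*Y) by (apply Rmult_lt_0_compat; nra).
   assert (0 < W + m^4) by nra.
   apply Rsqr_incrst_0; auto; try lra. unfold Rsqr. nra. }
 apply Rnot_lt_le. intros H1.
 assert (E1 : 4*mu*((W+1)/(2*Y))^2 = mu*(W+1)^2/Y^2) by (field; lra).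
 rewrite E1 in H1.
 assert (H1' : mu*(W+1)^2 < (mu+1)^2 * Y^2).
 { apply divlt; auto. apply pow_lt; auto. }
 assert (H4 : m*(W+1) < (m*m+1)*Y).
 { subst mu. assert (0 < (m*m+1)*Y) by nra. assert (0 < m*(W+1)) by nra.
   apply Rsqr_incrst_0; auto; try lra. unfold Rsqr. nra. }
 assert (K1 : (m*Y - 1)*(Y - m) < 0) by nra.
 assert (K2 : (Y - m)*(Y - m*m*m) < 0) by nra.
 assert (m <> 1) by (intro Hm1; apply Hmu1; rewrite Emu, Hm1; ring).
 destruct (Rlt_dec m Y).
 - assert (m*Y < 1) by nra. assert (Y < m*m*m) by nra.
   destruct (Rlt_dec m 1). nra. nra.
 - assert (Y <> m) by (intro; subst; lra). assert (Y < m) by lra.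
   assert (1 < m*Y) by nra. assert (m*m*m < Y) by nra.
   destruct (Rlt_dec m 1). nra. nra.
Qed.

Lemma Qc_scale1 x y mu : 0 < mu -> 0 < y -> Qc (mu*x) (mu*y) 0 1 = Qc x y 0 (/mu).
Proof. intros. unfold Qc. field. lra. Qed.
Lemma Qc_scale2 x y mu : 0 < mu -> 0 < y -> Qc (mu*x) (mu*y) 0 mu = Qc x y 0 1.
Proof. intros. unfold Qc. field. lra. Qed.
Lemma sgn_sq X : (sgn X)^2 = 1.
Proof. unfold sgn. destruct (Rle_dec 0 X); ring. Qed.
Lemma sqrt_sq' r : 0 <= r -> sqrt (r^2) = r.
Proof. intros. rewrite <- Rsqr_pow2. apply sqrt_Rsqr; auto. Qed.
Lemma sq_sqrt' x : 0 <= x -> (sqrt x)^2 = x.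
Proof. intros. rewrite <- Rsqr_pow2. apply Rsqr_sqrt; auto. Qed.

Lemma pathV (c o u : H2) (k : R) : c <> o -> k = dH u c ^2 - dH u o ^2 ->
 exists ax ay : R -> R, ax k = hx u /\ ay k = hy u /\
  forall v, between 0 k v -> 0 < ay v /\ continuity_pt ax v /\ continuity_pt ay v /\
     dHc (ax v) (ay v) (hx c) (hy c) ^2 - dHc (ax v) (ay v) (hx o) (hy o) ^2 = v.
Proof.
 intros Hco Hk.
 destruct (normalize c o Hco) as [Gx [Gy [mu [Hmu [Hmu1 [HGy [HGQ [HGc [Gc1 [Gc2 [Go1 [Go2 Hpre]]]]]]]]]]]].
 destruct (Hpre u) as [X [Y [HY [Hu1 Hu2]]]].
 assert (dc : forall Zx Zy, 0 < Zy -> dHc (Gx Zx Zy) (Gy Zx Zy) (hx c) (hy c) = arcosh (1 + Qc Zx Zy 0 1)).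
 { intros. unfold dHc. rewrite <- Gc1, <- Gc2, HGQ; auto; lra. }
 assert (do : forall Zx Zy, 0 < Zy -> dHc (Gx Zx Zy) (Gy Zx Zy) (hx o) (hy o) = arcosh (1 + Qc Zx Zy 0 mu)).
 { intros. unfold dHc. rewrite <- Go1, <- Go2, HGQ; auto; lra. }
 set (Cc := (X^2+Y^2+1)/(2*Y)). set (Co := (X^2+Y^2+mu^2)/(2*mu*Y)).
 assert (ECc : 1 + Qc X Y 0 1 = Cc) by (unfold Cc, Qc; field; lra).
 assert (ECo : 1 + Qc X Y 0 mu = Co) by (unfold Co, Qc; field; lra).
 assert (HCc : 1 <= Cc) by (rewrite <- ECc; pose proof (Qc_ge0 X Y 0 1 HY ltac:(lra)); lra).
 assert (HCo : 1 <= Co) by (rewrite <- ECo; pose proof (Qc_ge0 X Y 0 mu HY Hmu); lra).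
 assert (Er : dH u c = arcosh Cc).
 { rewrite dH_dHc, <- Hu1, <- Hu2, dc; auto. rewrite ECc; auto. }
 assert (Es : dH u o = arcosh Co).
 { rewrite dH_dHc, <- Hu1, <- Hu2, do; auto. rewrite ECo; auto. }
 set (r := arcosh Cc) in *. set (s := arcosh Co) in *.
 assert (Hr : 0 <= r) by (apply arcosh_ge0; auto).
 assert (Hs : 0 <= s) by (apply arcosh_ge0; auto).
 assert (cr : cosh r = Cc) by (apply cosh_arcosh; auto).
 assert (cs : cosh s = Co) by (apply cosh_arcosh; auto).
 rewrite Er, Es in Hk.
 destruct (Rle_dec ((mu+1)^2) (4*mu*Cc^2)) as [HA|HB].
 - (* circle around c *)
   set (T := fun v => cosh (sqrt (r^2 - v))).
   set (Zy := fun v => PyT mu Cc (T v)).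
   set (Zx := fun v => PxT (sgn X) Cc (Zy v)).
   exists (fun v => Gx (Zx v) (Zy v)), (fun v => Gy (Zx v) (Zy v)).
   assert (Tk : T k = Co) by (unfold T; rewrite Hk; replace (r^2 - (r^2 - s^2)) with (s^2) by ring;
            rewrite sqrt_sq'; auto).
   assert (Zk : Zy k = Y /\ Zx k = X).
   { destruct (pathP1 mu X Y Cc Co Hmu Hmu1 HY eq_refl eq_refl) as [P1 P2].
     unfold Zx, Zy. rewrite Tk, P1. auto. }
   destruct Zk as [Zk1 Zk2].
   split; [rewrite Zk1, Zk2; auto|]. split; [rewrite Zk1, Zk2; auto|].
   intros v Hv.
   assert (Hv1 : 0 <= r^2 - v) by (destruct Hv; rewrite Hk in *; pose proof (pow2_ge_0 s); pose proof (pow2_ge_0 r); lra).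
   assert (HbT : between Co Cc (T v)).
   { unfold T. rewrite <- cr, <- cs. apply btw_cosh; auto.
     assert (B0 : between (sqrt (s^2)) (sqrt (r^2)) (sqrt (r^2 - v))).
     { apply btw_sqrt. unfold between in *. rewrite Hk in *. lra. }
     rewrite !sqrt_sq' in B0; auto. }
   destruct (pathP mu X Y Cc Co (T v) Hmu Hmu1 HY eq_refl eq_refl HA HbT) as [Hden [HPy [Hq Hid]]].
   destruct (Hid (sgn X) (sgn_sq X)) as [Id1 Id2].
   fold (Zy v) in HPy, Hq, Id1, Id2. fold (Zx v) in Id1, Id2.
   assert (cT : continuity_pt T v).
   { unfold T. apply cp_cosh. apply cp_sqrt; [|auto]. cpt. }
   assert (cZy : continuity_pt Zy v).
   { unfold Zy, PyT. apply (cp_div (fun _ => _) (fun t => 2*(mu*T t - Cc))). cpt. cpt. lra. }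
   assert (cZx : continuity_pt Zx v).
   { unfold Zx, PxT. apply (cp_mult (fun _ => _)). cpt. apply cp_sqrt; auto. cpt. }
   destruct (HGc Zx Zy v cZx cZy HPy) as [K1 K2].
   split. apply HGy; auto. split. exact K1. split. exact K2.
   rewrite dc, do; auto. rewrite Id1, Id2. replace (1 + (Cc - 1)) with Cc by ring. fold r.
   unfold T. rewrite arcosh_cosh by apply sqrt_pos. rewrite sq_sqrt'; auto. ring.
 - (* circle around o *)
   assert (HB' : (mu+1)^2 <= 4*mu*Co^2) by (apply caseB; auto).
   set (mu' := /mu). set (X' := X/mu). set (Y' := Y/mu).
   assert (Hmu' : 0 < mu') by (apply Rinv_0_lt_compat; auto).
   assert (Hmu1' : mu' <> 1) by (intro E; apply Hmu1; rewrite <- (Rinv_inv mu); unfold mu' in E; rewrite E; field).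
   assert (HY' : 0 < Y') by (apply Rdiv_lt_0_compat; auto).
   assert (EC : Co = (X'^2+Y'^2+1)/(2*Y')) by (unfold Co, X', Y'; field; split; lra).
   assert (ET : Cc = (X'^2+Y'^2+mu'^2)/(2*mu'*Y')) by (unfold Cc, X', Y', mu'; field; split; lra).
   assert (HA' : (mu'+1)^2 <= 4*mu'*Co^2).
   { replace ((mu'+1)^2) with ((mu+1)^2/mu^2) by (unfold mu'; field; lra).
     replace (4*mu'*Co^2) with (4*mu*Co^2/mu^2) by (unfold mu'; field; lra).
     unfold Rdiv. apply Rmult_le_compat_r; auto. left. apply Rinv_0_lt_compat. apply pow_lt; auto. }
   set (T := fun v => cosh (sqrt (v + s^2))).
   set (Zy := fun v => PyT mu' Co (T v)).
   set (Zx := fun v => PxT (sgn X') Co (Zy v)).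
   exists (fun v => Gx (mu * Zx v) (mu * Zy v)), (fun v => Gy (mu * Zx v) (mu * Zy v)).
   assert (Tk : T k = Cc) by (unfold T; rewrite Hk; replace (r^2 - s^2 + s^2) with (r^2) by ring;
            rewrite sqrt_sq'; auto).
   assert (Zk : Zy k = Y' /\ Zx k = X').
   { destruct (pathP1 mu' X' Y' Co Cc Hmu' Hmu1' HY' EC ET) as [P1 P2].
     unfold Zx, Zy. rewrite Tk, P1. auto. }
   destruct Zk as [Zk1 Zk2].
   assert (E1 : mu * Y' = Y) by (unfold Y'; field; lra).
   assert (E2 : mu * X' = X) by (unfold X'; field; lra).
   split; [rewrite Zk1, Zk2, E1, E2; auto|]. split; [rewrite Zk1, Zk2, E1, E2; auto|].
   intros v Hv.
   assert (Hv1 : 0 <= v + s^2) by (destruct Hv; rewrite Hk in *; pose proof (pow2_ge_0 s); pose proof (pow2_ge_0 r); lra).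
   assert (HbT : between Cc Co (T v)).
   { unfold T. rewrite <- cr, <- cs. apply btw_sym. apply btw_cosh; auto.
     assert (B0 : between (sqrt (s^2)) (sqrt (r^2)) (sqrt (v + s^2))).
     { apply btw_sqrt. unfold between in *. rewrite Hk in *. lra. }
     rewrite !sqrt_sq' in B0; auto. }
   destruct (pathP mu' X' Y' Co Cc (T v) Hmu' Hmu1' HY' EC ET HA' HbT) as [Hden [HPy [Hq Hid]]].
   destruct (Hid (sgn X') (sgn_sq X')) as [Id1 Id2].
   fold (Zy v) in HPy, Hq, Id1, Id2. fold (Zx v) in Id1, Id2.
   assert (cT : continuity_pt T v).
   { unfold T. apply cp_cosh. apply cp_sqrt; [|auto]. cpt. }
   assert (cZy : continuity_pt Zy v).
   { unfold Zy, PyT. apply (cp_div (fun _ => _) (fun t => 2*(mu'*T t - Co))). cpt. cpt. lra. }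
   assert (cZx : continuity_pt Zx v).
   { unfold Zx, PxT. apply (cp_mult (fun _ => _)). cpt. apply cp_sqrt; auto. cpt. }
   assert (HPy2 : 0 < mu * Zy v) by (apply Rmult_lt_0_compat; auto).
   destruct (HGc (fun t => mu * Zx t) (fun t => mu * Zy t) v) as [K1 K2]; try cpt; auto.
   split. apply HGy; auto. split. exact K1. split. exact K2.
   rewrite dc, do; auto. rewrite Qc_scale1, Qc_scale2; auto. fold mu'. rewrite Id2.
   replace (1 + Qc (Zx v) (Zy v) 0 1) with Co by (rewrite Id1; ring). fold s.
   unfold T. rewrite arcosh_cosh by apply sqrt_pos. rewrite sq_sqrt'; auto. ring.
Qed.

Lemma cdHc fx fy v X2 Y2 : continuity_pt fx v -> continuity_pt fy v -> 0 < fy v -> 0 < Y2 ->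
  continuity_pt (fun t => dHc (fx t) (fy t) X2 Y2) v.
Proof. intros. unfold dHc. apply cp_arcosh.
 - apply (cp_plus (fun _ => 1)). cpt. unfold Qc.
   apply (cp_div (fun t => _) (fun t => 2 * fy t * Y2)); cpt. nra.
 - pose proof (Qc_ge0 (fx v) (fy v) X2 Y2 H1 H2). lra. Qed.

Lemma dHc_ge0 X1 Y1 X2 Y2 : 0 < Y1 -> 0 < Y2 -> 0 <= dHc X1 Y1 X2 Y2.
Proof. intros. apply arcosh_ge0. pose proof (Qc_ge0 X1 Y1 X2 Y2 H H0). lra. Qed.

Lemma btw0 k : between 0 k 0.
Proof. unfold between. destruct (Rle_dec 0 k); [left|right]; lra. Qed.
Lemma btwk k : between 0 k k.
Proof. unfold between. destruct (Rle_dec 0 k); [left|right]; lra. Qed.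

Lemma sign_keep (phi : R -> R) k : (forall v, between 0 k v -> continuity_pt phi v) ->
  (forall v, between 0 k v -> phi v <> 0) -> 0 < phi k -> 0 < phi 0.
Proof. intros Hc Hn Hk.
 destruct (Rlt_dec 0 (phi 0)) as [|H0]; auto. exfalso.
 assert (H0' : phi 0 < 0) by (assert (phi 0 <> 0) by (apply Hn; apply btw0); lra).
 destruct (Rtotal_order 0 k) as [Hlt|[Heq|Hgt]].
 - destruct (Ranalysis5.IVT_interv phi 0 k) as [z [Hz1 Hz2]]; auto.
   intros a Ha; apply Hc; left; lra. apply (Hn z); auto. left; lra.
 - subst. lra.
 - destruct (Ranalysis5.IVT_interv (fun t => - phi t) k 0) as [z [Hz1 Hz2]]; auto.
   intros a Ha. apply (continuity_pt_opp phi). apply Hc; right; lra. lra. lra.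
   apply (Hn z). right; lra. lra.
Qed.

Lemma hy_pos (z : H2) : 0 < hy z.
Proof. destruct z as [[? ?] ?]; auto. Qed.

Theorem mainTheorem3 (x y : H2xH2) (g ginv : H2xH2 -> H2xH2) :
  fst x <> fst y -> snd x <> snd y ->
  isometry g -> inverse_of g ginv ->
  (forall p, ~ (Eset x y p /\ Eset x (g x) p)) ->
  (forall p, ~ (Eset x y p /\ Eset x (ginv x) p)) ->
  (invisible_set g ginv x (Eset x y) <-> invisible_set g ginv x (spine x y)).
Proof.
 intros H1 H2 _ _ Hg Hgi. split.
 - intros HE q Hq. apply HE. unfold spine, Ek, Sk in Hq. destruct Hq as [Q1 Q2].
   unfold Eset, rho. f_equal. lra.
 - intros HS p Hp Hvis.
   destruct p as [p1 p2]. destruct x as [x1 x2], y as [y1 y2]. simpl in H1, H2.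
   set (k := dH p1 x1 ^2 - dH p1 y1 ^2).
   assert (Hk2 : k = dH p2 y2 ^2 - dH p2 x2 ^2).
   { unfold Eset, rho in Hp. simpl in Hp. apply sqrt_inj in Hp;
       try (apply Rplus_le_le_0_compat; apply pow2_ge_0). unfold k. lra. }
   destruct (pathV x1 y1 p1 k H1 eq_refl) as [a1 [b1 [Ea1 [Eb1 Hp1]]]].
   destruct (pathV y2 x2 p2 k (not_eq_sym H2) Hk2) as [a2 [b2 [Ea2 [Eb2 Hp2]]]].
   assert (mk : forall v, between 0 k v -> {q : H2xH2 | hx (fst q) = a1 v /\ hy (fst q) = b1 v /\
                                             hx (snd q) = a2 v /\ hy (snd q) = b2 v}).
   { intros v Hv. destruct (Hp1 v Hv) as [P1 _]. destruct (Hp2 v Hv) as [P2 _].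
     exists (exist (fun p => 0 < snd p) (a1 v, b1 v) P1, exist (fun p => 0 < snd p) (a2 v, b2 v) P2).
     unfold hx, hy; simpl. auto. }
   set (Fw := fun (w : H2xH2) v => sqrt (dHc (a1 v) (b1 v) (hx (fst w)) (hy (fst w)) ^2 +
                                         dHc (a2 v) (b2 v) (hx (snd w)) (hy (snd w)) ^2)).
   assert (Fq : forall v Hv w, rho (proj1_sig (mk v Hv)) w = Fw w v).
   { intros. destruct (mk v Hv) as [q [e1 [e2 [e3 e4]]]]. simpl. unfold rho, Fw.
     rewrite !dH_dHc, e1, e2, e3, e4. reflexivity. }
   assert (inE : forall v Hv, Eset (x1,x2) (y1,y2) (proj1_sig (mk v Hv))).
   { intros. unfold Eset. rewrite !Fq. unfold Fw. simpl.
     destruct (Hp1 v Hv) as [_ [_ [_ E1]]]. destruct (Hp2 v Hv) as [_ [_ [_ E2]]]. f_equal. lra. }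
   assert (Fk : forall w, Fw w k = rho (p1,p2) w).
   { intros. unfold Fw, rho. simpl. rewrite Ea1, Eb1, Ea2, Eb2. reflexivity. }
   assert (cF : forall w v, between 0 k v -> continuity_pt (Fw w) v).
   { intros w v Hv. destruct (Hp1 v Hv) as [P1 [C1 [C2 _]]]. destruct (Hp2 v Hv) as [P2 [C3 [C4 _]]].
     unfold Fw. apply cp_sqrt. apply cp_plus; apply cp_pow; apply cdHc; auto; apply hy_pos.
     apply Rplus_le_le_0_compat; apply pow2_ge_0. }
   assert (key : forall w, (forall q, ~ (Eset (x1,x2) (y1,y2) q /\ Eset (x1,x2) w q)) ->
             rho (p1,p2) (x1,x2) <= rho (p1,p2) w ->
             Fw (x1,x2) 0 < Fw w 0).
   { intros w Hw Hv.
     assert (nz : forall v, between 0 k v -> Fw w v - Fw (x1,x2) v <> 0).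
     { intros v Hv' E. apply (Hw (proj1_sig (mk v Hv'))). split. apply inE.
       unfold Eset. rewrite !Fq. lra. }
     assert (0 < Fw w 0 - Fw (x1,x2) 0); [|lra].
     apply (sign_keep (fun v => Fw w v - Fw (x1,x2) v) k).
     - intros v Hv'. apply cp_minus; apply cF; auto.
     - exact nz.
     - rewrite !Fk. assert (Fw w k - Fw (x1,x2) k <> 0) by (apply nz; apply btwk).
       rewrite !Fk in H. lra. }
   destruct Hvis as [V1 V2].
   pose proof (key _ (Hg) V1) as K1. pose proof (key _ (Hgi) V2) as K2.
   apply (HS (proj1_sig (mk 0 (btw0 k)))).
   + unfold spine, Ek, Sk. destruct (mk 0 (btw0 k)) as [q [e1 [e2 [e3 e4]]]]. simpl.
     destruct (Hp1 0 (btw0 k)) as [_ [_ [_ E1]]]. destruct (Hp2 0 (btw0 k)) as [_ [_ [_ E2]]].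
     rewrite !dH_dHc, e1, e2, e3, e4. simpl. split; lra.
   + unfold visible. rewrite !Fq. split; lra.
Qed.
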